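(* Let $R$ be a route. Then $$\operatorname{conv}(\Pi(R))=\Big\{y\in\mathbb{R}^{[N]\times V_+}_{\ge 0}:\ y^\xi(R')\ge k_\xi(R')-1\ \text{ for all subroutes } R'\subseteq R \text{ and all } \xi\in[N]\Big\}.$$
   Context: $G=(V,E)$ is a complete undirected graph with $V=\{0\}\cup V_+$ ($0$ is the depot, $V_+$ the set of customers); $D=(V,A)$ is the digraph obtained by replacing each edge by two opposite arcs. $C\in\mathbb{Q}_{>0}$ is the vehicle capacity. There are $N$ scenarios $\xi\in[N]=\{1,\dots,N\}$, each with a demand vector $d^\xi\in\mathbb{Q}_{\ge 0}^{V_+}$ and probability $p_\xi\in[0,1]\cap\mathbb{Q}$, $\sum_\xi p_\xi=1$; it is assumed that $d^\xi(v)\le C$ for all $\xi\in[N]$, $v\in V_+$. For a vector $f$ and set $S$ of its coordinates, $f(S)=\sum_{i\in S}f(i)$; $k_\xi(S)=\lceil d^\xi(S)/C\rceil$. A route $R=(v_1,\dots,v_\ell)$ ($\ell\ge 1$, distinct customers $v_i\in V_+$) is the cycle $0,v_1,\dots,v_\ell,0$; $V_+(R)=\{v_1,\dots,v_\ell\}$ and $v_0=v_{\ell+1}=0$. A subroute of $R$ is a route $R'=(v_i,\dots,v_j)$ with $1\le i\le j\le \ell$, written $R'\subseteq R$. Vectors $y\in\mathbb{R}^{[N]\times V_+}$ have entries $y^\xi_v$; $y^\xi\in\mathbb{R}^{V_+}$ is the restriction to scenario $\xi$; $y^\xi(R')=y^\xi(V_+(R'))$, $k_\xi(R')=k_\xi(V_+(R'))$.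 For a route $R=(v_1,\dots,v_\ell)$ and $\xi\in[N]$, a recourse action is an integer vector $y^\xi\in\mathbb{Z}^{V_+}_{\ge 0}$ for which there exist $f\in\mathbb{R}^{A}_{\ge 0}$ and $g\in\mathbb{R}^{V_+}_{\ge 0}$ with $f_{(v_{i-1},v_i)}+d^\xi(v_i)=f_{(v_i,v_{i+1})}+g_{v_i}$ for all $i\in[\ell]$, $f_{(v_{i-1},v_i)}\le C$ for all $i\in[\ell+1]$, and $g_{v_i}\le C\,y^\xi_{v_i}$ for all $i\in[\ell]$. The set of recourse actions is $\mathcal{Y}^\xi(R)$, and the set of recourse policies is $\Pi(R)=\mathcal{Y}^1(R)\times\cdots\times\mathcal{Y}^N(R)\subseteq\mathbb{Z}^{[N]\times V_+}$. *)

(* Defs.v *)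
From HB Require Import structures.
From mathcomp Require Import all_boot all_order all_algebra.
From mathcomp Require Import reals.
Set Implicit Arguments. Unset Strict Implicit. Unset Printing Implicit Defensive.
Import Order.TTheory GRing.Theory Num.Theory.
Local Open Scope ring_scope.

(* Customers V_+ are the elements of a finType [V]; the vertex set
   V = {0} ∪ V_+ is [option V], with [None] the depot 0.
   A route R = (v_1,...,v_l) is a sequence [r : seq V] (nonempty, uniq). *)

(* v_i for i in 0..l+1 : v_0 = v_{l+1} = depot. *)
Definition pos (V : eqType) (r : seq V) (i : nat) : option V :=
  if i == 0%N then None else nth None (map Some r) i.-1.

(* Vertex sequence of the subroute (v_{a+1},...,v_{b+1}) (0-based a <= b < l). *)
Definition subroute (V : Type) (r : seq V) (a b : nat) : seq V :=
  take (b - a).+1 (drop a r).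

Definition kcap (V : Type) (C : rat) (dxi : V -> rat) (S : seq V) : int :=
  Num.ceil ((\sum_(v <- S) dxi v) / C).

Definition recourse_action (R : realType) (V : finType) (C : rat)
    (dxi : V -> rat) (r : seq V) (yxi : V -> nat) : Prop :=
  exists (f : option V -> option V -> R) (g : V -> R),
    (forall a b, 0 <= f a b) /\ (forall v, 0 <= g v) /\
    (forall i v, pos r i = Some v ->
        f (pos r i.-1) (pos r i) + ratr (dxi v) = f (pos r i) (pos r i.+1) + g v) /\
    (forall i, (1 <= i <= (size r).+1)%N -> f (pos r i.-1) (pos r i) <= ratr C) /\
    (forall i v, pos r i = Some v -> g v <= ratr C * (yxi v)%:R).

Definition policies (R : realType) (V : finType) (N : nat) (C : rat)
    (d : 'I_N -> V -> rat) (r : seq V) (y : 'I_N -> V -> R) : Prop :=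
  forall xi : 'I_N, exists z : V -> nat,
    (forall v, y xi v = (z v)%:R) /\ recourse_action R C (d xi) r z.

Definition conv (R : realType) (V : finType) (N : nat)
    (S : ('I_N -> V -> R) -> Prop) (y : 'I_N -> V -> R) : Prop :=
  exists (n : nat) (w : 'I_n -> R) (x : 'I_n -> 'I_N -> V -> R),
    (forall j, 0 <= w j) /\ \sum_(j < n) w j = 1 /\ (forall j, S (x j)) /\
    (forall xi v, y xi v = \sum_(j < n) w j * x j xi v).

Definition route_polyhedron (R : realType) (V : finType) (N : nat) (C : rat)
    (d : 'I_N -> V -> rat) (r : seq V) (y : 'I_N -> V -> R) : Prop :=
  (forall xi v, 0 <= y xi v) /\
  (forall (xi : 'I_N) (a b : nat), (a <= b < size r)%N ->
     \sum_(v <- subroute r a b) y xi v >= (kcap C (d xi) (subroute r a b))%:~R - 1).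

(* Main.v *)
Require Import Defs.
From HB Require Import structures.
From mathcomp Require Import all_boot all_order all_algebra.
From mathcomp Require Import reals lra ring.
Set Implicit Arguments. Unset Strict Implicit. Unset Printing Implicit Defensive.
Import Order.TTheory GRing.Theory Num.Theory.
Local Open Scope ring_scope.

Section Thresh.
Variable R : realType.

Lemma tmono (ts : seq R) : sorted <=%R ts -> all (fun t => t < 1) ts ->
  forall i j, (i <= j)%N -> nth 1 ts i <= nth 1 ts j.
Proof.
move=> so al i j ij.
case: (ltnP j (size ts)) => hj.
  apply: (sorted_leq_nth le_trans le_refl) => //; rewrite inE //.
  exact: leq_ltn_trans hj.
rewrite (nth_default _ hj).
case: (ltnP i (size ts)) => hi; last by rewrite nth_default.
by apply: ltW; move/allP: al; apply; apply: mem_nth.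
Qed.

Lemma floor_frac (f t : R) : 0 <= f < 1 -> 0 <= t <= 1 ->
  Num.floor (f + 1 - t) = if t <= f then 1 else 0.
Proof.
move=> /andP[f0 f1] /andP[t0 t1]; apply: floor_def.
have [h|h] := lerP t f; rewrite /= ?intrD /=; apply/andP; split; lra.
Qed.


Lemma tsum_w (ts : seq R) : sorted <=%R ts -> all (fun t => 0 <= t < 1) ts -> 0 \in ts ->
  \sum_(k < size ts) (nth 1 ts k.+1 - nth 1 ts k) = 1.
Proof.
move=> so al z0.
have al' : all (fun t => t < 1) ts.
  by apply/allP=> t /(allP al) /andP[].
rewrite -(big_mkord xpredT (fun k => nth 1 ts k.+1 - nth 1 ts k)).
rewrite telescope_sumr // nth_default // .
have -> : nth 1 ts 0 = 0; last by rewrite subr0.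
apply/eqP; rewrite eq_le; apply/andP; split.
  rewrite -(nth_index 1 z0); apply: tmono => //.
have : nth 1 ts 0 \in ts by apply: mem_nth; case: ts z0 {so al al'}.
by move/(allP al)/andP=> [].
Qed.

Lemma tsum_x (ts : seq R) : sorted <=%R ts -> all (fun t => 0 <= t < 1) ts -> 0 \in ts ->
  forall x, x - (Num.floor x)%:~R \in ts ->
  \sum_(k < size ts) (nth 1 ts k.+1 - nth 1 ts k) * (Num.floor (x + (1 - nth 1 ts k.+1)))%:~R = x.
Proof.
move=> so al z0 x fin.
have al' : all (fun t => t < 1) ts.
  by apply/allP=> t /(allP al) /andP[].
set f := x - _ in fin.
have f01 : 0 <= f < 1 by apply: (allP al).
have t01 : forall k, 0 <= nth 1 ts k <= 1.
  move=> k; case: (ltnP k (size ts)) => hk; last by rewrite nth_default // ler01 lexx.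
  by have /andP[h1 h2] := allP al _ (mem_nth 1 hk); rewrite h1 ltW.
pose G k := if nth 1 ts k <= f then nth 1 ts k else f.
have eqk : forall k, (k < size ts)%N ->
  (nth 1 ts k.+1 - nth 1 ts k) * (Num.floor (x + (1 - nth 1 ts k.+1)))%:~R
  = (nth 1 ts k.+1 - nth 1 ts k) * (Num.floor x)%:~R + (G k.+1 - G k).
  move=> k hk.
  have -> : x + (1 - nth 1 ts k.+1) = (f + 1 - nth 1 ts k.+1) + (Num.floor x)%:~R.
    by rewrite /f; ring.
  rewrite floorDrz ?intr_int // intrKfloor floor_frac // intrD mulrDr addrC; congr (_ + _).
  have [h|h] := lerP (nth 1 ts k.+1) f.
    by rewrite mulr1 /G h ifT //; apply: le_trans h; apply: tmono.
  rewrite mulr0.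
  have fk : f <= nth 1 ts k.
    rewrite -(nth_index 1 fin); case: (leqP (index f ts) k) => hK.
      by apply: tmono.
    have : nth 1 ts k.+1 <= nth 1 ts (index f ts) by apply: tmono.
    by rewrite (nth_index 1 fin) leNgt h.
  have Gk : G k = f.
    by rewrite /G; case: ifP => // h'; apply/eqP; rewrite eq_le h' fk.
  have Gk1 : G k.+1 = f by rewrite /G ifF //; apply/negbTE; rewrite -ltNge.
  by rewrite Gk Gk1 subrr.
rewrite (eq_bigr (fun k : 'I_(size ts) => (nth 1 ts k.+1 - nth 1 ts k) * (Num.floor x)%:~R + (G k.+1 - G k))); last first.
  by move=> k _; apply: eqk.
rewrite big_split /= -mulr_suml tsum_w // mul1r.
rewrite -(big_mkord xpredT (fun k => G k.+1 - G k)) telescope_sumr //.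
have -> : G (size ts) = f by rewrite /G nth_default // ifF //; apply/negbTE; rewrite -ltNge; case/andP: f01.
have -> : G 0%N = 0.
  have t0 : nth 1 ts 0 = 0.
    apply/eqP; rewrite eq_le; apply/andP; split.
      rewrite -(nth_index 1 z0); apply: tmono => //.
    by case/andP: (t01 0%N).
  by rewrite /G t0; case/andP: f01 => -> _.
by rewrite subr0 /f; ring.
Qed.
End Thresh.

Fixpoint runmin (R : realType) (Q : nat -> R) (j : nat) : R :=
  match j with
  | 0 => Q 0%N
  | j'.+1 => if runmin Q j' <= Q j'.+1 then runmin Q j' else Q j'.+1
  end.

Section Gen.
Variable R : realType.

Lemma sum_subroute (T : Type) (r : seq T) (x0 : T) a b (F : T -> R) :
  (a <= b < size r)%N ->
  \sum_(v <- subroute r a b) F v = \sum_(a <= i < b.+1) F (nth x0 r i).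
Proof.
move=> /andP[ab bs].
rewrite (big_nth x0) /subroute size_take size_drop.
have -> : (if (b - a).+1 < size r - a then (b - a).+1 else size r - a)%N = (b - a).+1.
  case: ifP => // /negbT; rewrite -leqNgt => h; apply/eqP; rewrite eqn_leq h /=.
  by rewrite ltn_sub2r // (leq_ltn_trans ab bs).
rewrite -[in RHS](add0n a) big_addn big_mkord [RHS]big_mkord.
have -> : (b.+1 - a = (b - a).+1)%N by rewrite subSn.
apply: eq_bigr => i _; rewrite nth_take // nth_drop addnC //.
Qed.

Lemma pos_some (T : eqType) (r : seq T) x0 j : (j < size r)%N ->
  pos r j.+1 = Some (nth x0 r j).
Proof. by move=> h; rewrite /pos /= (nth_map x0). Qed.

Lemma pos_inv (T : eqType) (r : seq T) i v : pos r i = Some v ->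
  exists j, [/\ i = j.+1, (j < size r)%N & v = nth v r j].
Proof.
rewrite /pos; case: i => [|j] //=.
case: (ltnP j (size r)) => h.
  rewrite (nth_map v) // => -[e]; by exists j; rewrite e.
by rewrite nth_default // size_map.
Qed.

Lemma pos0 (T : eqType) (r : seq T) : pos r 0 = None.
Proof. by []. Qed.


Lemma ceil_step (C D : rat) (m : nat) : 0 < C ->
  ratr D <= ratr C * (m%:R + 1) :> R -> (Num.ceil (D / C))%:~R - 1 <= m%:R :> R.
Proof.
move=> C0 h.
have h' : D <= C * (m.+1)%:R.
  by rewrite -(ler_rat R) rmorphM /= ratr_nat -[m.+1]addn1 natrD.
have : Num.ceil (D / C) <= (m.+1)%:Z.
  by rewrite ceil_le_int ler_pdivrMr // mulrC.
move=> h1; have h2 : (Num.ceil (D / C))%:~R <= ((m.+1)%:Z)%:~R :> R by rewrite ler_int.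
have e : ((m.+1)%:Z)%:~R = m%:R + 1 :> R by rewrite -pmulrn -[m.+1]addn1 natrD.
rewrite e in h2; lra.
Qed.

Lemma necessity (V : finType) (C : rat) (dxi : V -> rat) (r : seq V) (z : V -> nat) :
  0 < C -> recourse_action R C dxi r z ->
  forall a b, (a <= b < size r)%N ->
  (kcap C dxi (subroute r a b))%:~R - 1 <= \sum_(v <- subroute r a b) (z v)%:R :> R.
Proof.
move=> C0 [f [g [f0 [g0 [feq [fb gb]]]]]] a b hab.
have /andP[ab bs] := hab.
have [x0 _] : exists x0 : V, true.
  destruct r as [|v r']; first by rewrite ltn0 in bs.
  by exists v.
pose c : R := ratr C.
pose phi i := f (pos r i) (pos r i.+1).
have key : forall j, (j < size r)%N ->
    g (nth x0 r j) - ratr (dxi (nth x0 r j)) = phi j - phi j.+1.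
  move=> j hj; have := feq j.+1 _ (pos_some x0 hj); rewrite /phi /= => e; lra.
have tel : \sum_(a <= j < b.+1) (g (nth x0 r j) - ratr (dxi (nth x0 r j))) = phi a - phi b.+1.
  rewrite (@telescope_sumr_eq _ _ _ (fun j => - phi j)); first by ring.
    by apply: leqW.
  move=> k /andP[_ hk]; rewrite key; first by ring.
  exact: leq_trans hk bs.
have pa : 0 <= phi a := f0 _ _.
have pb : phi b.+1 <= c.
  by have := fb b.+2; rewrite /=; apply; rewrite /= ltnS bs.
have gz : \sum_(a <= j < b.+1) g (nth x0 r j) <= c * \sum_(a <= j < b.+1) (z (nth x0 r j))%:R.
  rewrite mulr_sumr; apply: ler_sum_nat => j /andP[_ hj].
  apply: gb j.+1 _ _; apply: pos_some; exact: leq_trans hj bs.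
rewrite sumrB in tel.
have hD : \sum_(a <= j < b.+1) ratr (dxi (nth x0 r j)) <= c * (\sum_(a <= j < b.+1) (z (nth x0 r j))%:R + 1) :> R.
  lra.
rewrite /kcap (sum_subroute x0) // -natr_sum.
apply: ceil_step => //.
rewrite rmorph_sum (sum_subroute x0) // /= natr_sum.
exact: hD.
Qed.


Lemma rm_le (Q : nat -> R) j i : (i <= j)%N -> runmin Q j <= Q i.
Proof.
elim: j i => [|j IH] i.
  by rewrite leqn0 => /eqP ->.
rewrite leq_eqVlt => /orP[/eqP ->|hi] /=.
  by case: ifP => // /negbT; rewrite -ltNge => /ltW.
case: ifP => h; first exact: IH.
move/negbT: h; rewrite -ltNge => h; apply: le_trans (ltW h) (IH _ _); exact: hi.
Qed.

Lemma rm_ex (Q : nat -> R) j : exists2 i, (i <= j)%N & runmin Q j = Q i.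
Proof.
elim: j => [|j [i hi e]]; first by exists 0%N.
rewrite /=; case: ifP => _; last by exists j.+1.
by exists i => //; apply: leqW.
Qed.

Lemma rm_dec (Q : nat -> R) j : runmin Q j.+1 <= runmin Q j.
Proof.
by rewrite /=; case: ifP => // /negbT; rewrite -ltNge => /ltW.
Qed.

Lemma rm_step (Q : nat -> R) j : runmin Q j.+1 = runmin Q j \/ runmin Q j.+1 = Q j.+1.
Proof. by rewrite /=; case: ifP; [left|right]. Qed.

Lemma pos_ex (T : eqType) (r : seq T) j : (j < size r)%N ->
  exists v, pos r j.+1 = Some v /\ forall x0, nth x0 r j = v.
Proof.
destruct r as [|t r']; first by [].
move=> h; exists (nth t (t :: r') j); split; first exact: pos_some.
by move=> x0; apply: set_nth_default.
Qed.

Lemma sufficiency (V : finType) (C : rat) (dxi : V -> rat) (r : seq V) (z : V -> nat) :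
  0 < C -> (forall v, 0 <= dxi v) -> uniq r ->
  (forall a b, (a <= b < size r)%N ->
     (kcap C dxi (subroute r a b))%:~R - 1 <= \sum_(v <- subroute r a b) (z v)%:R :> R) ->
  recourse_action R C dxi r z.
Proof.
move=> C0 d0 ur hz.
pose c : R := ratr C.
have c0 : 0 < c by rewrite /c -(rmorph0 (@ratr R)) ltr_rat.
pose term v := ratr (dxi v) - c * (z v)%:R.
pose Q j := \sum_(v <- take j r) term v.
pose L j := Q j - runmin Q j.
have Q0 : Q 0%N = 0 by rewrite /Q take0 big_nil.
have L0 : L 0%N = 0 by rewrite /L /= subrr.
have Lge : forall j, 0 <= L j by move=> j; rewrite /L subr_ge0; apply: rm_le.
have Qs : forall j x0, (j < size r)%N -> Q j.+1 = Q j + term (nth x0 r j).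
  by move=> j x0 hj; rewrite /Q (take_nth x0 hj) -cats1 big_cat big_seq1.
pose f (a b : option V) := match a with None => 0 | Some v => L (index v r).+1 end.
pose g v := if v \in r then c * (z v)%:R + runmin Q (index v r).+1 - runmin Q (index v r) else 0.
have fpos : forall j b, (j <= size r)%N -> f (pos r j) b = L j.
  move=> [|j] b hj; first by rewrite /= L0.
  have [v [-> hv]] := pos_ex hj.
  by rewrite /f -(hv v) index_uniq.
have Lle : forall j, (j <= size r)%N -> L j <= c.
  move=> j hj; have [i0 hi0 e] := rm_ex Q j.
  rewrite /L e; case: (ltnP i0 j) => hlt; last first.
    have -> : i0 = j by apply/eqP; rewrite eqn_leq hi0 hlt.
    by rewrite subrr ltW.
  have [x0 _] : exists x0 : V, true.
    destruct r as [|v r']; first by move: hj hlt; rewrite leqn0 => /eqP ->.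
    by exists v.
  have hab : (i0 <= j.-1 < size r)%N.
    by case: j hj hlt {hi0 e} => // j hj hlt /=; rewrite -ltnS hlt.
  have := hz _ _ hab.
  have eQ : Q j = Q i0 + \sum_(v <- subroute r i0 j.-1) term v.
    rewrite /Q /subroute -big_cat -takeD; congr (\sum_(v <- take _ r) _).
    by case: j hj hlt {hi0 e hab} => // j _ hlt /=; rewrite addnS subnKC.
  rewrite eQ /term big_split /= sumrN -mulr_sumr.
  set S := subroute r i0 j.-1.
  have hD : \sum_(v <- S) ratr (dxi v) <= c * (kcap C dxi S)%:~R.
    rewrite -rmorph_sum /c -ratr_int -rmorphM ler_rat /kcap.
    by rewrite mulrC -ler_pdivrMr // ceil_ge.
  move=> hk.
  have : c * ((kcap C dxi S)%:~R - 1) <= c * \sum_(v <- S) (z v)%:R.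
    by rewrite ler_wpM2l // ltW.
  rewrite mulrBr mulr1 => hk2.
  lra.
exists f, g; split; last split; last split; last split.
- by move=> [v|] b //=.
- move=> v; rewrite /g; case: ifP => // vr.
  have hj : (index v r < size r)%N by rewrite index_mem.
  have [e|e] := rm_step Q (index v r).
    by rewrite e addrK mulr_ge0 // ltW.
  rewrite e (Qs _ v hj) nth_index //.
  have := rm_le Q (leqnn (index v r)).
  have : 0 <= ratr (dxi v) :> R by rewrite -(rmorph0 (@ratr R)) ler_rat.
  have : 0 <= c * (z v)%:R by rewrite mulr_ge0 // ltW.
  rewrite /term; lra.
- move=> i v hp.
  have [j [ei hj ev]] := pos_inv hp.
  rewrite ei /= fpos ?(ltnW hj) // fpos // /g.
  have vr : v \in r by rewrite ev mem_nth.
  rewrite vr ev index_uniq // /L (Qs _ v hj) /term -ev; ring.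
- move=> i /andP[i1 i2]; rewrite fpos; first by apply: Lle; rewrite -ltnS prednK.
  by rewrite -ltnS prednK.
- move=> i v hp.
  have [j [ei hj ev]] := pos_inv hp.
  have vr : v \in r by rewrite ev mem_nth.
  rewrite /g vr.
  have := rm_dec Q (index v r); lra.
Qed.

End Gen.

Unset Implicit Arguments.
Theorem theorem2 (R : realType) (V : finType) (N : nat) (C : rat)
    (d : 'I_N -> V -> rat) (r : seq V)
    (hC : 0 < C)
    (hd0 : forall xi v, 0 <= d xi v)
    (hdC : forall xi v, d xi v <= C)
    (hr : r != [::]) (hu : uniq r) :
  forall y : 'I_N -> V -> R,
    @conv R V N (@policies R V N C d r) y <-> @route_polyhedron R V N C d r y.
Proof.
move=> y; split.
- case=> n [w [x [w0 [w1 [xP ye]]]]]; split.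
    move=> xi v; rewrite ye; apply: sumr_ge0 => j _; apply: mulr_ge0 => //.
    by have [zz [e _]] := xP j xi; rewrite e ler0n.
  move=> xi a b hab.
  under eq_bigr do rewrite ye.
  rewrite exchange_big /=.
  set k := (kcap C (d xi) (subroute r a b))%:~R.
  have -> : k - 1 = \sum_(j < n) w j * (k - 1) by rewrite -mulr_suml w1 mul1r.
  apply: ler_sum => j _; rewrite -mulr_sumr; apply: ler_wpM2l => //.
  have [zz [e hrc]] := xP j xi.
  under eq_bigr do rewrite e.
  exact: necessity.
- case=> y0 ycon.
  pose Pf xi p := \sum_(v <- take p r) y xi v.
  pose lo xi v := if v \in r then Pf xi (index v r) else 0.
  pose hi xi v := lo xi v + y xi v.
  pose fr (x : R) := x - (Num.floor x)%:~R.
  have fr01 : forall x, 0 <= fr x < 1.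
    move=> x; have := floor_itv x; rewrite /fr intrD => /andP[h1 h2].
    apply/andP; split; lra.
  pose T := 0 :: [seq fr (lo p.1 p.2) | p <- enum [set: 'I_N * V]]
                 ++ [seq fr (hi p.1 p.2) | p <- enum [set: 'I_N * V]].
  pose ts := sort <=%R T.
  have so : sorted <=%R ts by apply: sort_sorted; exact: le_total.
  have al : all (fun t => 0 <= t < 1) ts.
    apply/allP => t; rewrite mem_sort inE => /orP[/eqP ->|]; first by rewrite lexx ltr01.
    by rewrite mem_cat => /orP[] /mapP [p _ ->].
  have al' : all (fun t => t < 1) ts by apply/allP=> t /(allP al) /andP[].
  have z0 : 0 \in ts by rewrite mem_sort mem_head.
  have frlo : forall xi v, fr (lo xi v) \in ts.
    move=> xi v; rewrite mem_sort inE mem_cat; apply/orP; right; apply/orP; left.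
    by apply/mapP; exists (xi, v) => //; rewrite mem_enum in_setT.
  have frhi : forall xi v, fr (hi xi v) \in ts.
    move=> xi v; rewrite mem_sort inE mem_cat; apply/orP; right; apply/orP; right.
    by apply/mapP; exists (xi, v) => //; rewrite mem_enum in_setT.
  pose th k := 1 - nth 1 ts k.+1.
  pose zi k xi v : int := Num.floor (hi xi v + th k) - Num.floor (lo xi v + th k).
  have zi0 : forall k xi v, 0 <= zi k xi v.
    move=> k xi v; rewrite subr_ge0; apply: le_floor; rewrite lerD2r /hi lerDl; exact: y0.
  have zE : forall k xi v, ((absz (zi k xi v))%:R : R) = (zi k xi v)%:~R.
    by move=> k xi v; rewrite natr_absz ger0_norm.
  exists (size ts), (fun k : 'I_(size ts) => nth 1 ts k.+1 - nth 1 ts k),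
    (fun k xi v => ((absz (zi k xi v))%:R : R)).
  split; last split; last split.
  + by move=> k; rewrite subr_ge0; apply: tmono.
  + exact: tsum_w.
  + move=> k xi; exists (fun v => absz (zi k xi v)); split => //.
    apply: sufficiency => // a b hab.
    have /andP[ab bs] := hab.
    have [x0 _] : exists x0 : V, true.
      destruct r as [|v r']; first by rewrite ltn0 in bs.
      by exists v.
    have PfS : forall i, (i < size r)%N -> Pf xi i.+1 = Pf xi i + y xi (nth x0 r i).
      by move=> i hi0; rewrite /Pf (take_nth x0 hi0) -cats1 big_cat big_seq1.
    have loN : forall i, (i < size r)%N -> lo xi (nth x0 r i) = Pf xi i.
      by move=> i hi0; rewrite /lo mem_nth // index_uniq.
    pose F i := Num.floor (Pf xi i + th k).
    rewrite (sum_subroute x0) //.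
    rewrite (@telescope_sumr_eq _ a b.+1 (fun i => (F i)%:~R : R)); last first.
      move=> i /andP[_ hi0]; have hi1 : (i < size r)%N by apply: leq_trans hi0 bs.
      by rewrite zE /zi /hi loN // -PfS // intrB.
      by apply: leqW.
    have eP : Pf xi b.+1 = Pf xi a + \sum_(v <- subroute r a b) y xi v.
      by rewrite /Pf /subroute -big_cat -takeD addnS subnKC.
    have hy := ycon xi a b hab.
    set kk := kcap C (d xi) (subroute r a b) in hy *.
    have e1 : Num.floor (Pf xi a + th k + (kk - 1)%:~R) = F a + (kk - 1).
      by rewrite floorDrz ?intr_int // intrKfloor.
    have hF : F a + (kk - 1) <= F b.+1.
      rewrite -e1 /F; apply: le_floor; rewrite eP intrB; lra.
    have : ((F a + (kk - 1))%:~R : R) <= (F b.+1)%:~R by rewrite ler_int.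
    rewrite intrD intrB; lra.
  + move=> xi v.
    under eq_bigr do rewrite zE intrB mulrBr.
    rewrite sumrB.
    rewrite /th (tsum_x so al z0 (frhi xi v)) (tsum_x so al z0 (frlo xi v)) /hi.
    by rewrite addrC addKr.
Qed.
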